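(* Assume $n\ge 3t+1$. In any execution of COOL, if $\eta^{[2]}=2$ then $\eta^{[3]}\le 1$.
   Context: Setting. $n$ processors indexed by $[1:n]$, pairwise joined by reliable private synchronous channels; recipients know senders. At most $t$ processors are dishonest, controlled by an adversary who may make them deviate arbitrarily (missing values replaced by a fixed default); the others are honest. Processor $i$ holds an $\ell$-bit initial message $\boldsymbol w_i$. $\phi$ is a default value different from every $\ell$-bit message. Logarithms are base 2. Code. $k=\lfloor t/5\rfloor+1$, $c=\lceil \max\{\ell,(t/5+1)\log(n+1)\}/k\rceil$. Messages are zero-padded to $kc$ bits and viewed in $GF(2^c)^k$. Integers in $[1:n]$ are identified with distinct nonzero elements of $GF(2^c)$; $\boldsymbol h_i\in GF(2^c)^k$ has entries $h_{i,j}=\prod_{p\in[1:k],\,p\ne j}\frac{i-p}{j-p}$ (field arithmetic). COOL, Phases 1–3 (honest processor $i$). Initialization: updated message $\boldsymbol w^{(i)}:=\boldsymbol w_i$, $y^{(i)}_j:=\boldsymbol h_j^{\mathsf T}\boldsymbol w_i$, $u_i(i):=1$. Phase 1. (a) Send $(y^{(i)}_j,y^{(i)}_i)$ to each $j\ne i$. (b) For $j\ne i$, link indicator $u_i(j):=1$ if the pair received from $j$ equals $(y^{(i)}_i,y^{(i)}_j)$, else $0$. Success indicator $s_i:=1$ if $\sum_{j=1}^n u_i(j)\ge n-t$; otherwise $s_i:=0$ and $\boldsymbol w^{(i)}:=\phi$. (c) Send $s_i$ to all; each processor records the indicator received from each $j$ (own for itself) and forms $\mathcal S_1=\{j:s_j=1\}$,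 $\mathcal S_0=\{j:s_j=0\}$ (views may differ between processors). Phase 2. If $s_i=1$: set $u_i(j):=0$ for all $j\in\mathcal S_0$; if now $\sum_j u_i(j)<n-t$, set $s_i:=0$, $\boldsymbol w^{(i)}:=\phi$ and send $s_i=0$ to all. Everyone overwrites recorded indicators with newly received ones and recomputes $\mathcal S_0,\mathcal S_1$. Phase 3 begins by repeating the steps of Phase 2 once more (followed by a vote and binary agreement, irrelevant here). Notation. For $p\in\{1,2,3\}$, $s^{[p]}_i$ is the value of honest processor $i$'s success indicator at the end of (the indicator-updating steps of) Phase $p$, and $\eta^{[p]}$ is the number of distinct values in $\{\boldsymbol w_i: i\text{ honest},\ s^{[p]}_i=1\}$ (initial messages). *)

(* Defs.v *)
From HB Require Import structures.
From mathcomp Require Import all_boot all_order all_algebra all_field.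
Set Implicit Arguments. Unset Strict Implicit. Unset Printing Implicit Defensive.
Import GRing.Theory.
Local Open Scope ring_scope.

Definition kk (t : nat) : nat := (t %/ 5 + 1)%N.

(* c = ceil( max{l, (t/5+1) log2(n+1)} / k ), characterized exactly:
   c is the least natural number with  k*c >= l  and  k*c >= ((t+5)/5) log2(n+1),
   the latter being equivalent to  2^(5 k c) >= (n+1)^(t+5). *)
Definition c_ok (t n l c : nat) : bool :=
  (l <= kk t * c)%N && ((n.+1) ^ (t + 5) <= 2 ^ (5 * (kk t * c)))%N.
Definition is_c (t n l c : nat) : Prop :=
  c_ok t n l c /\ forall c', c_ok t n l c' -> (c <= c')%N.

Section Cool.
Variables (F : fieldType) (t n l c : nat) (alpha : nat -> F).
Local Notation k := (kk t).

(* Messages are l-bit strings; zero-padded to k*c bits (nth false beyond l),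
   cut into k blocks of c bits, each block identified with an element of
   GF(2^c) through the bijection toF. *)
Definition enc (toF : c.-tuple bool -> F) (w : l.-tuple bool) (m : 'I_k) : F :=
  toF [tuple nth false w (m * c + b) | b < c].

(* h_{i,j} = prod_{p in [1:k], p <> j} (i - p)/(j - p), where processor labels
   are identified with field elements via alpha.  Here i is the label (1-based),
   j : 'I_k stands for label j+1. *)
Definition hcoef (i : nat) (j : 'I_k) : F :=
  \prod_(p < k | p != j) ((alpha i - alpha p.+1) / (alpha j.+1 - alpha p.+1)).

Definition code_sym (x : 'I_k -> F) (i : nat) : F :=
  \sum_(m < k) hcoef i m * x m.

(* An execution: processors are 'I_n, processor i has label i+1.
   H = set of honest processors; w = initial messages; adv1 j i = pair sent by
   dishonest j to i in Phase 1(a); adv2 j i / adv3 j i = indicator recorded by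
   i for dishonest j after Phase 1(c) / after Phase 2. *)
Variables (toF : c.-tuple bool -> F) (w : 'I_n -> l.-tuple bool)
  (H : {set 'I_n}) (adv1 : 'I_n -> 'I_n -> F * F) (adv2 adv3 : 'I_n -> 'I_n -> bool).

Definition yv (i j : 'I_n) : F := code_sym (enc toF (w i)) j.+1.

Definition recv1 (i j : 'I_n) : F * F :=
  if j \in H then (yv j i, yv j j) else adv1 j i.

Definition u1 (i j : 'I_n) : bool := (j == i) || (recv1 i j == (yv i i, yv i j)).

Definition s1 (i : 'I_n) : bool := (n - t <= #|[pred j | u1 i j]|)%N.

Definition rec1 (i j : 'I_n) : bool :=
  if j == i then s1 i else if j \in H then s1 j else adv2 j i.

Definition u2 (i j : 'I_n) : bool := u1 i j && rec1 i j.
Definition s2 (i : 'I_n) : bool := s1 i && (n - t <= #|[pred j | u2 i j]|)%N.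

Definition rec2 (i j : 'I_n) : bool :=
  if j == i then s2 i else if j \in H then s2 j else adv3 j i.

Definition u3 (i j : 'I_n) : bool := u2 i j && rec2 i j.
Definition s3 (i : 'I_n) : bool := s2 i && (n - t <= #|[pred j | u3 i j]|)%N.

Definition eta_count (s : 'I_n -> bool) : nat := #|[set w i | i in H & s i]|.

End Cool.

(* Main.v *)
Require Import Defs.
From HB Require Import structures.
From mathcomp Require Import all_boot all_order all_algebra all_field.
From mathcomp Require Import zify.
Set Implicit Arguments. Unset Strict Implicit. Unset Printing Implicit Defensive.
Import GRing.Theory.
Local Open Scope ring_scope.

Lemma hcoef_node (F : fieldType) (t n : nat) (alpha : nat -> F) (q m : 'I_(kk t)) :
  (kk t <= n)%N ->
  (forall i j : nat, (1 <= i <= n)%N -> (1 <= j <= n)%N -> alpha i = alpha j -> i = j) ->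
  hcoef alpha q.+1 m = (m == q)%:R.
Proof.
move=> hk ainj.
have lab : forall r : 'I_(kk t), (1 <= r.+1 <= n)%N.
  by move=> r; apply/andP; split => //; apply: leq_trans (ltn_ord r) hk.
rewrite /hcoef; have [->|neq] := eqVneq m q.
  rewrite big1 // => r rq; rewrite divff // subr_eq0; apply/eqP => /ainj.
  by move=> /(_ (lab q) (lab r)) [] /val_inj/eqP; rewrite eq_sym (negbTE rq).
rewrite (bigD1 q) /=; last by rewrite eq_sym.
by rewrite subrr mul0r mul0r.
Qed.

Lemma code_node (F : fieldType) (t n : nat) (alpha : nat -> F) (x : 'I_(kk t) -> F) (q : 'I_(kk t)) :
  (kk t <= n)%N ->
  (forall i j : nat, (1 <= i <= n)%N -> (1 <= j <= n)%N -> alpha i = alpha j -> i = j) ->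
  code_sym alpha x q.+1 = x q.
Proof.
move=> hk ainj; rewrite /code_sym (bigD1 q) //= big1 => [|m mq].
  by rewrite (hcoef_node _ _ hk ainj) eqxx mul1r addr0.
by rewrite (hcoef_node _ _ hk ainj) (negbTE mq) mul0r.
Qed.

Definition lagP (F : fieldType) (t : nat) (alpha : nat -> F) (x : 'I_(kk t) -> F) : {poly F} :=
  \sum_(q < kk t) (x q * \prod_(r < kk t | r != q) (alpha q.+1 - alpha r.+1)^-1) *:
     \prod_(r < kk t | r != q) ('X - (alpha r.+1)%:P).

Lemma lagP_eval (F : fieldType) (t : nat) (alpha : nat -> F) (x : 'I_(kk t) -> F) (i : nat) :
  (lagP alpha x).[alpha i] = code_sym alpha x i.
Proof.
rewrite /lagP /code_sym horner_sum; apply: eq_bigr => q _.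
rewrite hornerZ horner_prod /hcoef.
rewrite -mulrA mulrC; congr (_ * _).
rewrite -big_split /=; apply: eq_bigr => r _.
by rewrite hornerXsubC mulrC.
Qed.

Lemma lagP_size (F : fieldType) (t : nat) (alpha : nat -> F) (x : 'I_(kk t) -> F) :
  (size (lagP alpha x) <= kk t)%N.
Proof.
rewrite /lagP; apply: leq_trans (size_sum _ _ _) _.
apply/bigmax_leqP => q _.
apply: leq_trans (size_scale_leq _ _) _.
rewrite -big_filter size_prod_XsubC size_filter.
have -> : count (fun i : 'I_(kk t) => i != q) (index_enum 'I_(kk t)) = #|predC1 q|.
  by rewrite cardE /enum_mem size_filter.
by rewrite cardC1 card_ord /kk addn1.
Qed.

Lemma zeros_bound (F : fieldType) (t n : nat) (alpha : nat -> F) (x : 'I_(kk t) -> F) :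
  (kk t <= n)%N ->
  (forall i j : nat, (1 <= i <= n)%N -> (1 <= j <= n)%N -> alpha i = alpha j -> i = j) ->
  (exists q, x q != 0) ->
  (#|[set p : 'I_n | code_sym alpha x p.+1 == 0%R]| <= t %/ 5)%N.
Proof.
move=> hk ainj [q xq].
set D := [set p : 'I_n | _].
have P0 : lagP alpha x != 0.
  apply/eqP => P0; move: (lagP_eval alpha x q.+1); rewrite P0 horner0 (code_node _ q hk ainj).
  by move=> h; move: xq; rewrite -h eqxx.
set rs := [seq alpha (val p).+1 | p : 'I_n <- enum D].
have Hall : all (root (lagP alpha x)) rs.
  apply/allP => y /mapP [p]; rewrite mem_enum inE => /eqP hp ->.
  by rewrite /root lagP_eval hp.
have Hu : uniq rs.
  rewrite map_inj_in_uniq ?enum_uniq // => p1 p2 _ _ /ainj.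
  have lab : forall r : 'I_n, (1 <= r.+1 <= n)%N by move=> r; apply/andP; split.
  by move=> /(_ (lab p1) (lab p2)) [] /val_inj.
have := max_poly_roots P0 Hall Hu.
rewrite size_map -cardE => h.
have := leq_trans h (lagP_size alpha x); rewrite /kk addn1 ltnS; exact.
Qed.

Lemma enc_inj (F : fieldType) (t l c : nat) (toF : c.-tuple bool -> F) (m m' : l.-tuple bool) :
  injective toF -> (l <= kk t * c)%N -> (forall q : 'I_(kk t), enc toF m q = enc toF m' q) -> m = m'.
Proof.
move=> tinj hl h; apply: eq_from_tnth => i.
have hi : (i < kk t * c)%N := leq_trans (ltn_ord i) hl.
have cpos : (0 < c)%N by case: (c) hi => //; rewrite muln0.
have hq : (i %/ c < kk t)%N by rewrite ltn_divLR // -mulnC.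
have hb : (i %% c < c)%N by rewrite ltn_pmod.
have := tinj _ _ (h (Ordinal hq)) => /(congr1 (fun tt => tnth tt (Ordinal hb))).
rewrite !tnth_mktuple /= -divn_eq.
by rewrite !(tnth_nth false).
Qed.

Lemma code_sub (F : fieldType) (t : nat) (alpha : nat -> F) (x y : 'I_(kk t) -> F) i :
  code_sym alpha (fun q => x q - y q) i = code_sym alpha x i - code_sym alpha y i.
Proof. by rewrite /code_sym -sumrB; apply: eq_bigr => q _; rewrite mulrBr. Qed.

Lemma agree_msgs (F : fieldType) (t n l c : nat) (alpha : nat -> F) (toF : c.-tuple bool -> F)
  (m m' : l.-tuple bool) :
  (kk t <= n)%N ->
  (forall i j : nat, (1 <= i <= n)%N -> (1 <= j <= n)%N -> alpha i = alpha j -> i = j) ->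
  injective toF -> (l <= kk t * c)%N -> m != m' ->
  (#|[set p : 'I_n | code_sym (t:=t) alpha (enc toF m) p.+1 == code_sym (t:=t) alpha (enc toF m') p.+1]|
     <= t %/ 5)%N.
Proof.
move=> hk ainj tinj hl neq.
have ex : exists q : 'I_(kk t), (fun q => enc toF m q - enc toF m' q) q != 0.
  apply/existsP; apply: contraR neq => /existsPn hall; apply/eqP.
  apply: enc_inj tinj hl _ => q; apply/eqP; rewrite -subr_eq0; exact: negbNE (hall q).
have := zeros_bound hk ainj ex.
congr (_ <= _)%N; apply: eq_card => p; rewrite !inE code_sub subr_eq0 //.
Qed.

Lemma arith2 (n t f d ba bb r h dab dba dca dcb p u3 u2 : nat) :
  (n - t <= p -> p <= f + u3 -> u3 <= u2 + dcb -> u2 <= r + dca ->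
  dca <= d -> dcb <= d -> dab <= d -> dba <= d ->
  n - t <= f + (ba + dab) -> n - t <= f + (bb + dba) ->
  ba + bb + r <= h -> h + f = n -> 5 * d <= t -> f <= t -> 3 * t + 1 <= n -> False)%N.
Proof. lia. Qed.
Lemma arith3 (n t f h a1 b1 : nat) :
  (n - t <= f + a1 -> n - t <= f + b1 -> a1 + b1 <= h -> h + f = n -> f <= t -> 3 * t + 1 <= n -> False)%N.
Proof. lia. Qed.

Lemma arith4 (n t f d ba dab : nat) :
  (n - t <= f + (ba + dab) -> dab <= d -> 5 * d <= t -> f <= t -> 3 * t + 1 <= n -> ba <= dab -> False)%N.
Proof. lia. Qed.

Lemma card_bound (n : nat) (H : {set 'I_n}) (P : pred 'I_n) (X : {set 'I_n}) :
  (forall j, P j -> j \in H -> j \in X) -> (#|[pred j | P j]| <= #|~: H| + #|X|)%N.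
Proof.
move=> hP; apply: leq_trans (_ : #|~: H :|: X| <= _)%N; last first.
  by rewrite cardsU leq_subr.
apply: subset_leq_card; apply/subsetP => j; rewrite !inE => Pj.
by case: (boolP (j \in H)) => hj //=; rewrite hP.
Qed.

Lemma card_union_le (n : nat) (A B : {set 'I_n}) : (#|A :|: B| <= #|A| + #|B|)%N.
Proof. by rewrite cardsU leq_subr. Qed.

Lemma card_disj_sub (n : nat) (H A B : {set 'I_n}) :
  A \subset H -> B \subset H -> [disjoint A & B] -> (#|A| + #|B| <= #|H|)%N.
Proof.
move=> sA sB dAB; have := leq_card_setU A B; rewrite dAB => -[_ /eqP <-].
by apply: subset_leq_card; rewrite subUset sA sB.
Qed.

Theorem lemma12 (t n l c : nat) (F : finFieldType) (alpha : nat -> F)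
  (toF : c.-tuple bool -> F) (w : 'I_n -> l.-tuple bool) (H : {set 'I_n})
  (adv1 : 'I_n -> 'I_n -> F * F) (adv2 adv3 : 'I_n -> 'I_n -> bool) :
  (3 * t + 1 <= n)%N ->
  is_c t n l c ->
  #|F| = (2 ^ c)%N ->
  bijective toF ->
  (forall i j : nat, (1 <= i <= n)%N -> (1 <= j <= n)%N -> alpha i = alpha j -> i = j) ->
  (forall i : nat, (1 <= i <= n)%N -> alpha i != 0%R) ->
  (#|~: H| <= t)%N ->
  eta_count w H (s2 t alpha toF w H adv1 adv2) = 2%N ->
  (eta_count w H (s3 t alpha toF w H adv1 adv2 adv3) <= 1)%N.
Proof.
move=> hn [/andP [hl _] _] _ [g toFK _] ainj _ hH eta2.
have tinj : injective toF := can_inj toFK.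
have hk : (kk t <= n)%N.
  rewrite /kk; lia.
have hd : (5 * (t %/ 5) <= t)%N by lia.
set d := (t %/ 5)%N in hd.
set f := #|~: H| in hH.
have hHf : (#|H| + f = n)%N by rewrite /f cardsC card_ord.
pose code (m : l.-tuple bool) (p : 'I_n) := code_sym (t:=t) alpha (enc toF m) p.+1.
have agree : forall m m', m != m' -> (#|[set p : 'I_n | code m p == code m' p]| <= d)%N.
  by move=> m m' neq; apply: agree_msgs.
pose S1 := s1 t alpha toF w H adv1.
pose S2 := s2 t alpha toF w H adv1 adv2.
pose S3 := s3 t alpha toF w H adv1 adv2 adv3.
have link : forall i j, i \in H -> j \in H -> j != i ->
    u1 t alpha toF w H adv1 i j -> code (w j) i = code (w i) i /\ code (w j) j = code (w i) j.
  move=> i j hi hj ji; rewrite /u1 (negbTE ji) /= /recv1 hj => /eqP [e1 e2].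
  by split.
rewrite leqNgt; apply/negP => /card_gt1P [xa [xb [/imsetP [ia]]]].
rewrite inE => /andP [hia s3a] -> /imsetP [ib]; rewrite inE => /andP [hib s3b] -> neqab.
set a := w ia in neqab *; set b := w ib in neqab *.
have s2a : S2 ia by move: s3a => /andP [].
have s2b : S2 ib by move: s3b => /andP [].
have AB : forall j, j \in H -> S2 j -> w j = a \/ w j = b.
  move=> j hj s2j.
  have sub : [set a; b] \subset [set w i | i in H & S2 i].
    apply/subsetP => m; rewrite !inE => /orP [] /eqP ->; apply/imsetP.
      by exists ia => //; rewrite inE hia.
    by exists ib => //; rewrite inE hib.
  have := subset_leqif_cards sub; rewrite cards2 neqab.
  move: eta2; rewrite /eta_count => -> [_] /esym /eqP eqs.
  have : w j \in [set w i | i in H & S2 i] by apply/imsetP; exists j => //; rewrite inE hj.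
  by rewrite -eqs !inE => /orP [] /eqP; [left | right].
have step1 : forall i x y, i \in H -> S3 i -> w i = x ->
    (forall j, j \in H -> S2 j -> w j = x \/ w j = y) ->
    (n - t <= f + (#|[set j in H | S2 j && (w j == x)]| + #|[set p | code x p == code y p]|))%N.
  move=> i x y hi s3i wi XY.
  have s2i : S2 i by move: s3i => /andP [].
  move: s3i; rewrite /S3 /s3 => /andP [_ h].
  apply: leq_trans h _.
  have hP : forall j, u3 t alpha toF w H adv1 adv2 adv3 i j -> j \in H ->
      j \in [set j in H | S2 j && (w j == x)] :|: [set p | code x p == code y p]; last first.
    apply: leq_trans (card_bound hP) _.
    by rewrite leq_add2l card_union_le.
  move=> j; rewrite /u3 /u2 => /andP [/andP [u1j _] r2] hj.
  case: (eqVneq j i) => [->|ji]; first by rewrite !inE hi s2i wi eqxx.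
  move: r2; rewrite /rec2 (negbTE ji) hj => s2j.
  case: (XY j hj s2j) => wj; first by rewrite !inE /S2 hj s2j wj eqxx.
  have [_ e2] := link i j hi hj ji u1j; rewrite wj wi in e2.
  by rewrite !inE e2 eqxx orbT.
set Ba := [set j in H | S2 j && (w j == a)].
set Bb := [set j in H | S2 j && (w j == b)].
set Dab := [set p | code a p == code b p].
set Dba := [set p | code b p == code a p].
have h1 : (n - t <= f + (#|Ba| + #|Dab|))%N := step1 ia a b hia s3a erefl AB.
have h2 : (n - t <= f + (#|Bb| + #|Dba|))%N := step1 ib b a hib s3b erefl (fun j hj s2j =>
  match AB j hj s2j with or_introl h => or_intror h | or_intror h => or_introl h end).
have hDab := agree a b neqab.
have nba : b != a by rewrite eq_sym.
have hDba := agree b a nba.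
have dis : [disjoint Ba & Bb].
  rewrite disjoints_subset; apply/subsetP => j; rewrite !inE => /andP [_ /andP [_ /eqP ->]].
  by rewrite (negbTE neqab) !andbF.
set R := H :\: (Ba :|: Bb).
have hR : (#|Ba| + #|Bb| + #|R| <= #|H|)%N.
  rewrite -(cardsID (Ba :|: Bb) H) leq_add2r.
  apply: card_disj_sub dis; apply/subsetP => j hj; rewrite inE; apply/andP; split.
  - by move: hj; rewrite !inE => /andP [-> _].
  - by rewrite inE hj.
  - by move: hj; rewrite !inE => /andP [-> _].
  - by rewrite inE hj orbT.
have step2 : forall z, z \in H -> S1 z -> w z = a \/ w z = b.
  move=> z hz s1z.
  case: (eqVneq (w z) a) => [|nza]; first by left.
  case: (eqVneq (w z) b) => [|nzb]; first by right.
  exfalso.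
  have hDca := agree (w z) a nza.
  have hDcb := agree (w z) b nzb.
  have hP : forall j, u1 t alpha toF w H adv1 z j -> j \in H ->
      j \in R :|: [set p | code (w z) p == code a p] :|: [set p | code (w z) p == code b p].
    move=> j u1j hj.
    case: (boolP (j \in Ba)) => [|nBa].
      rewrite inE => /andP [_ /andP [_ /eqP wj]].
      have jz : j != z by apply: contra_neq nza => <-.
      have [_ e2] := link z j hz hj jz u1j; rewrite wj in e2.
      by rewrite !inE e2 eqxx !orbT.
    case: (boolP (j \in Bb)) => [|nBb].
      rewrite inE => /andP [_ /andP [_ /eqP wj]].
      have jz : j != z by apply: contra_neq nzb => <-.
      have [_ e2] := link z j hz hj jz u1j; rewrite wj in e2.
      by rewrite !inE e2 eqxx !orbT.
    by rewrite in_setU in_setU in_setD in_setU hj (negbTE nBa) (negbTE nBb).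
  have := card_bound hP; move: s1z; rewrite /S1 /s1 => hs1 hb.
  have hu := card_union_le (R :|: [set p | code (w z) p == code a p]) [set p | code (w z) p == code b p].
  have hu2 := card_union_le R [set p | code (w z) p == code a p].
  exact: (arith2 hs1 hb hu hu2 hDca hDcb hDab hDba h1 h2 hR hHf hd hH hn).
have step3 : forall j x y, j \in H -> S2 j -> w j = x -> ~~ (code x j == code y j) ->
    (forall z, z \in H -> S1 z -> w z = x \/ w z = y) ->
    (n - t <= f + #|[set z in H | S1 z && (w z == x)]|)%N.
  move=> j x y hj s2j wj nD XY.
  move: s2j; rewrite /S2 /s2 => /andP [s1j h].
  have hP : forall z, u2 t alpha toF w H adv1 adv2 j z -> z \in H ->
      z \in [set z in H | S1 z && (w z == x)].
    move=> z /andP [u1z r1] hz.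
    case: (eqVneq z j) => [->|zj]; first by rewrite !inE hj /S1 s1j wj eqxx.
    move: r1; rewrite /rec1 (negbTE zj) hz => s1z.
    case: (XY z hz s1z) => wz; first by rewrite !inE hz /S1 s1z wz eqxx.
    have [e1 _] := link j z hj hz zj u1z; rewrite wz wj in e1.
    by move: nD; rewrite e1 eqxx.
  exact: leq_trans h (card_bound hP).
have [ja] : exists2 ja, ja \in Ba & ja \notin Dab.
  apply/subsetPn; apply/negP => sub; have := subset_leq_card sub.
  exact: arith4 h1 hDab hd hH hn.
rewrite !inE => /andP [hja /andP [s2ja /eqP wja]] nDa.
have [jb] : exists2 jb, jb \in Bb & jb \notin Dba.
  apply/subsetPn; apply/negP => sub; have := subset_leq_card sub.
  exact: arith4 h2 hDba hd hH hn.
rewrite !inE => /andP [hjb /andP [s2jb /eqP wjb]] nDb.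
have g1 := step3 ja a b hja s2ja wja nDa step2.
have g2 := step3 jb b a hjb s2jb wjb nDb (fun z hz s1z =>
  match step2 z hz s1z with or_introl h => or_intror h | or_intror h => or_introl h end).
have dis1 : [disjoint [set z in H | S1 z && (w z == a)] & [set z in H | S1 z && (w z == b)]].
  rewrite disjoints_subset; apply/subsetP => j; rewrite !inE => /andP [_ /andP [_ /eqP ->]].
  by rewrite (negbTE neqab) !andbF.
have hs : forall x, [set z in H | S1 z && (w z == x)] \subset H.
  by move=> x; apply/subsetP => z; rewrite inE => /andP [].
have := card_disj_sub (hs a) (hs b) dis1.
move=> hc; exact: arith3 g1 g2 hc hHf hH hn.
Qed.
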